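(* Let $G$ be a connected threshold graph of order $n\ge 4$ and size $m$ with $n-1<m<\binom{n}{2}$, let $c$ be its number of type 1 vertices, $(b_1,\ldots,b_z)$ its backwards zero position sequence, $F_1=\sum_{i=1}^z b_i^2$, and $\rho$ the spectral radius of its adjacency matrix. Then the greatest real root $\xi$ of the polynomial $x^3-(c+1)x^2+cx-F_1$ satisfies $\xi\le 1+\rho$.
   Context: A threshold graph is a simple graph whose vertices can be ordered $v_1,\ldots,v_n$ so that for each $2\le i\le n$, $v_i$ is either adjacent to all of $v_1,\ldots,v_{i-1}$ (then $a_i=1$) or to none of them (then $a_i=0$); by convention $a_1=1$. Vertex $v_i$ is of type 1 if $a_i=1$ and of type 0 if $a_i=0$; $c$ and $z$ are the numbers of type 1 and type 0 vertices ($c+z=n$). The backwards zero position sequence $(b_1,\ldots,b_z)$ is defined by letting $b_i$ be the number of type 1 vertices appearing after the $i$-th type 0 vertex in the order $v_1,\ldots,v_n$. *)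

(* Defs.v *)
From HB Require Import structures.
From mathcomp Require Import all_boot all_order all_algebra.
From mathcomp Require Import reals.
Set Implicit Arguments. Unset Strict Implicit. Unset Printing Implicit Defensive.
Import Order.TTheory GRing.Theory Num.Theory.

(* A threshold graph is given by its creation sequence s = (a_1,...,a_n)
   (a_1 = true by convention). Vertices are 'I_n, vertex i stands for v_{i+1}.
   For i < j, v_i ~ v_j iff a_j = 1. *)
Definition tg_adj (n : nat) (s : seq bool) : rel 'I_n :=
  fun i j => (i != j) && nth false s (maxn i j).

Definition tg_connected (n : nat) (s : seq bool) : Prop :=
  forall x y : 'I_n, connect (@tg_adj n s) x y.

Definition tg_size (n : nat) (s : seq bool) : nat :=
  #|[set e : 'I_n * 'I_n | (e.1 < e.2)%N && tg_adj s e.1 e.2]|.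

Definition tg_c (s : seq bool) : nat := count id s.

Definition tg_bzps (s : seq bool) : seq nat :=
  [seq count id (drop p.+1 s) | p <- iota 0 (size s) & ~~ nth false s p].

Definition tg_F1 (s : seq bool) : nat := \sum_(b <- tg_bzps s) b ^ 2.

Local Open Scope ring_scope.

Definition tg_adjmx (R : realType) (n : nat) (s : seq bool) : 'M[R]_n :=
  \matrix_(i, j) (tg_adj s i j)%:R.

(* r is the spectral radius of A: the maximum modulus of an eigenvalue
   (adjacency matrices are symmetric, so all eigenvalues are real). *)
Definition is_spectral_radius (R : realType) (n : nat) (A : 'M[R]_n) (r : R) :=
  (exists2 l, eigenvalue A l & `|l| = r) /\
  (forall l, eigenvalue A l -> `|l| <= r).

Definition tg_poly (R : realType) (s : seq bool) : {poly R} :=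
  'X^3 - ((tg_c s).+1)%:R *: 'X^2 + (tg_c s)%:R *: 'X - ((tg_F1 s)%:R)%:P.

Definition is_greatest_root (R : realType) (p : {poly R}) (xi : R) :=
  root p xi /\ (forall x, root p x -> x <= xi).

(* Main.v *)
Require Import Defs.
From HB Require Import structures.
From mathcomp Require Import all_boot all_order all_algebra.
From mathcomp Require Import reals.
From mathcomp Require Import spectral sesquilinear.
From mathcomp.real_closed Require Import complex.
From mathcomp Require Import ring lra.
Import Order.TTheory GRing.Theory Num.Theory.
Set Implicit Arguments. Unset Strict Implicit. Unset Printing Implicit Defensive.
Local Open Scope ring_scope.

Lemma rayleigh (R : realType) n (A : 'M[R]_n) (x : 'rV[R]_n) (t : R) :
  A^T = A -> x != 0 -> t * (x *m x^T) 0 0 <= (x *m A *m x^T) 0 0 ->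
  exists2 l, eigenvalue A l & t <= l.
Proof.
case: n A x => [|n] A x symA.
  by rewrite thinmx0 eqxx.
move=> xN0 Hq.
pose f := real_complex R.
pose AC := map_mx f A.
have herm : AC \is hermsymmx.
  apply: realsym_hermsym.
    apply/is_hermitianmxP; rewrite expr0 scale1r map_mx_id //.
    by rewrite /AC map_trmx symA.
  by apply/mxOverP => i j; rewrite mxE; apply/complex_realP; eexists.
have /orthomx_spectralP AE := hermitian_normalmx herm.
set P := spectralmx AC in AE.
set d := spectral_diag AC in AE.
have Pu : P \is unitarymx := spectral_unitarymx AC.
have Punit : P \in unitmx := unitarymx_unit Pu.
have dreal := hermitian_spectral_diag_real herm; rewrite -/d in dreal.
have dre k : d 0 k = (complex.Re (d 0 k))%:C%C.
  by rewrite RRe_real //; apply: (mxOverP dreal).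
pose j := Order.arg_max ord0 xpredT (fun k => complex.Re (d 0 k)).
have dj k : d 0 k <= d 0 j.
  rewrite (dre k) (dre j) lecR /j.
  by case: Order.TotalTheory.arg_maxP => //= i _ /(_ k isT).
pose xC := map_mx f x.
have xCt : xC^t*%sesqui = map_mx f x^T.
  by apply/matrixP => i k; rewrite !mxE /=; exact: conjc_real.
have Pinv : invmx P = (P^t*)%sesqui := invmx_unitary Pu.
pose y := xC *m (P^t*)%sesqui.
have E1 : (xC *m AC *m xC^t*)%sesqui = y *m diag_mx d *m (y^t*)%sesqui.
  by rewrite {1}AE Pinv /y !trmx_mul !map_mxM trmxCK !mulmxA.
have E2 : (xC *m xC^t*)%sesqui = y *m (y^t*)%sesqui.
  by rewrite /y trmx_mul map_mxM trmxCK mulmxA -(mulmxA xC) -Pinv mulVmx // mulmx1.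
have qE : (y *m diag_mx d *m (y^t*)%sesqui) 0 0 = \sum_k d 0 k * (y 0 k * (y 0 k)^*).
  rewrite mxE; apply: eq_bigr => k _; rewrite mul_mx_diag !mxE.
  by rewrite mulrCA mulrA.
have nE : (y *m (y^t*)%sesqui) 0 0 = \sum_k (y 0 k * (y 0 k)^*).
  by rewrite mxE; apply: eq_bigr => k _; rewrite !mxE.
have fq : f ((x *m A *m x^T) 0 0) = \sum_k d 0 k * (y 0 k * (y 0 k)^*).
  by rewrite -qE -E1 xCt /xC /AC -!map_mxM [RHS]mxE.
have fn : f ((x *m x^T) 0 0) = \sum_k (y 0 k * (y 0 k)^*).
  by rewrite -nE -E2 xCt /xC -!map_mxM [RHS]mxE.
have npos : 0 < (x *m x^T) 0 0.
  rewrite mxE lt_def psumr_eq0; last by move=> k _; rewrite mxE -expr2 sqr_ge0.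
  rewrite sumr_ge0 ?andbT; last by move=> k _; rewrite mxE -expr2 sqr_ge0.
  apply: contra xN0 => /allP H; apply/eqP/rowP => k; rewrite mxE.
  by have := H k (mem_index_enum k); rewrite mxE mulf_eq0 orbb => /eqP.
have key : f t * f ((x *m x^T) 0 0) <= d 0 j * f ((x *m x^T) 0 0).
  apply: (le_trans (y := f ((x *m A *m x^T) 0 0))).
    by rewrite -rmorphM lecR.
  rewrite fq fn mulr_sumr; apply: ler_sum => k _.
  by apply: ler_wpM2r => //; exact: mul_conjC_ge0.
have tj : t <= complex.Re (d 0 j).
  rewrite ler_pM2r in key; last by rewrite ltcR.
  by move: key; rewrite dre lecR.
exists (complex.Re (d 0 j)) => //.
have PA : P *m AC = diag_mx d *m P.
  by rewrite {1}AE !mulmxA mulmxV // mul1mx.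
have ev : eigenvalue AC (d 0 j).
  apply/eigenvalueP; exists (row j P).
    by rewrite -row_mul PA mul_diag_mx; apply/rowP => k; rewrite !mxE.
  apply/eqP => H; have := congr1 (mulmx^~ (invmx P)) H.
  rewrite mul0mx -row_mul mulmxV // => /rowP/(_ j); rewrite !mxE eqxx /=.
  by move/eqP; rewrite oner_eq0.
move: ev; rewrite eigenvalue_root_char /AC -map_char_poly dre fmorph_root.
by rewrite eigenvalue_root_char.
Qed.

Definition wv (R : realType) (mu : R) (s : seq bool) (i : nat) : R :=
  if nth false s i then mu else (count id (drop i.+1 s))%:R.

Definition Nf (R : realType) (mu : R) (s : seq bool) : R :=
  \sum_(0 <= i < size s) wv mu s i ^+ 2.

Definition Qf (R : realType) (mu : R) (s : seq bool) : R :=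
  \sum_(0 <= j < size s) \sum_(0 <= i < size s)
     wv mu s i * ((i != j) && nth false s (maxn i j))%:R * wv mu s j.

Definition F1s (s : seq bool) : nat :=
  \sum_(0 <= i < size s) (if nth false s i then 0 else (count id (drop i.+1 s)) ^ 2)%N.

Lemma F1sE s : tg_F1 s = F1s s.
Proof.
rewrite /tg_F1 /tg_bzps /F1s big_map big_filter /index_iota subn0.
by rewrite big_mkcond; apply: eq_bigr => i _; case: (nth false s i).
Qed.

Lemma F1s_cons a s : F1s (a :: s) = (F1s s + (if a then 0 else (count id s) ^ 2))%N.
Proof.
rewrite /F1s /= big_nat_recl //= drop0 addnC; congr (_ + _)%N.
Qed.

Lemma Nf_eq (R : realType) (mu : R) s :
  Nf mu s = (count id s)%:R * mu ^+ 2 + (F1s s)%:R.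
Proof.
elim: s => [|a s IH]; first by rewrite /Nf /F1s !big_nil /= mul0r addr0.
rewrite /Nf /= big_nat_recl // F1s_cons.
have -> : \sum_(0 <= i < size s) wv mu (a :: s) i.+1 ^+ 2 = Nf mu s by [].
rewrite IH /wv /= drop0; case: a => /=; rewrite ?natrD ?natrX; ring.
Qed.

Lemma sum_type1 (R : realType) (mu : R) s :
  \sum_(0 <= j < size s) (nth false s j)%:R * wv mu s j = mu * (count id s)%:R.
Proof.
elim: s => [|a s IH]; first by rewrite big_nil /= mulr0.
rewrite /= big_nat_recl //.
have -> : \sum_(0 <= i < size s) (nth false (a :: s) i.+1)%:R * wv mu (a :: s) i.+1
   = \sum_(0 <= j < size s) (nth false s j)%:R * wv mu s j by [].
rewrite IH /wv /=; case: a => /=; rewrite ?natrD; ring.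
Qed.

Lemma Qf_eq (R : realType) (mu : R) s :
  Qf mu s = mu ^+ 2 * ((count id s)%:R * ((count id s)%:R - 1))
            + 2 * mu * (F1s s)%:R.
Proof.
elim: s => [|a s IH]; first by rewrite /Qf /F1s !big_nil /=; ring.
rewrite /Qf /= big_nat_recl // big_nat_recl //= mulr0 mul0r add0r.
have E1 : \sum_(0 <= i < size s) wv mu (a :: s) i.+1 *
       ((i.+1 != 0%N) && nth false (a :: s) (maxn i.+1 0))%:R * wv mu (a :: s) 0
     = mu * (count id s)%:R * wv mu (a :: s) 0.
  rewrite -sum_type1 mulr_suml; apply: eq_bigr => i _.
  by rewrite maxn0 /= [wv mu (a :: s) i.+1 * _]mulrC.
have E2 : \sum_(0 <= i < size s)
     \sum_(0 <= i0 < (size s).+1) wv mu (a :: s) i0 *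
       ((i0 != i.+1) && nth false (a :: s) (maxn i0 i.+1))%:R * wv mu (a :: s) i.+1
   = \sum_(0 <= i < size s) wv mu (a :: s) 0 * (nth false s i)%:R * wv mu s i
     + Qf mu s.
  rewrite /Qf -big_split /=; apply: eq_bigr => i _.
  rewrite big_nat_recl //=; congr (_ + _).
  by apply: eq_bigr => j _; rewrite eqSS maxnSS.
rewrite E1 E2 IH F1s_cons.
have -> : \sum_(0 <= i < size s) wv mu (a :: s) 0 * (nth false s i)%:R * wv mu s i
   = wv mu (a :: s) 0 * (mu * (count id s)%:R).
  by rewrite -sum_type1 mulr_sumr; apply: eq_bigr => i _; rewrite mulrA.
clear E1 E2; rewrite /wv /= drop0; case: a => /=; rewrite ?natrD ?natrX ?addn0; ring.
Qed.

Theorem theorem4p1 (R : realType) (n : nat) (s : seq bool) (rho xi : R) :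
  size s = n -> nth false s 0 = true -> (4 <= n)%N ->
  tg_connected n s ->
  (n.-1 < tg_size n s < 'C(n, 2))%N ->
  is_spectral_radius (tg_adjmx R n s) rho ->
  is_greatest_root (tg_poly R s) xi ->
  xi <= 1 + rho.
Proof.
move=> sz s0 n4 _ _ [[l0 _ l0r] rhoP] [rootxi _].
have rho0 : 0 <= rho by rewrite -l0r normr_ge0.
pose mu := xi - 1.
have [mu0|mupos] := lerP mu 0.
  by move: mu0; rewrite /mu; lra.
pose c : R := (tg_c s)%:R.
pose F : R := (tg_F1 s)%:R.
have HF : F = mu * (mu + 1) * (mu + 1 - c).
  move: rootxi; rewrite /root /tg_poly !hornerE /= => /eqP Hr.
  apply/eqP; rewrite -subr_eq0 -oppr_eq0; apply/eqP; rewrite -[RHS]Hr.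
  rewrite /F /c /mu mulrS /=; ring.
have n0 : (0 < n)%N by apply: leq_trans n4.
pose x := \row_(i < n) wv mu s i.
pose A := tg_adjmx R n s.
have xN0 : x != 0.
  apply/eqP => /rowP/(_ (Ordinal n0)); rewrite !mxE /wv /= s0 => mu0.
  by move: mupos; rewrite mu0 ltxx.
have symA : A^T = A.
  by apply/matrixP => i j; rewrite !mxE /tg_adj eq_sym maxnC.
have Nx : (x *m x^T) 0 0 = Nf mu s.
  rewrite mxE /Nf sz big_mkord; apply: eq_bigr => i _; rewrite !mxE expr2.
  by [].
have Qx : (x *m A *m x^T) 0 0 = Qf mu s.
  rewrite mxE /Qf sz big_mkord; apply: eq_bigr => j _.
  rewrite big_mkord !mxE mulr_suml; apply: eq_bigr => i _; rewrite !mxE.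
  by [].
have Hq : mu * (x *m x^T) 0 0 <= (x *m A *m x^T) 0 0.
  rewrite Nx Qx Nf_eq Qf_eq -F1sE -/F HF -subr_ge0.
  have -> : mu ^+ 2 * ((count id s)%:R * ((count id s)%:R - 1)) +
      2 * mu * (mu * (mu + 1) * (mu + 1 - c)) -
      mu * ((count id s)%:R * mu ^+ 2 + mu * (mu + 1) * (mu + 1 - c))
      = mu ^+ 2 * (mu + 1 - c) ^+ 2 by rewrite /c /tg_c; ring.
  by rewrite mulr_ge0 // sqr_ge0.
have [l evl mul] := rayleigh symA xN0 Hq.
have := rhoP l evl; have := ler_norm l.
by move: mul; rewrite /mu; lra.
Qed.
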